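(* Let $\alpha_s=(1+\rho)/\rho$ and for $x^n\in\{0,1\}^n$ let $\ell_s(x^n)=\lceil-\log_2(\alpha_s p(x^n))\rceil+1$. Define the Shannon–Fano–Elias–Gray (SFEG) code $\phi_{\mathrm{SFEG}}:\{0,1\}^n\to\{0,1\}^*$ by letting $\phi_{\mathrm{SFEG}}(x^n)$ be the binary string of length $\ell_s(x^n)$ consisting of the first $\ell_s(x^n)$ bits of the binary expansion of $F(x^n-1)+p(x^n)/2$, where $F$ is the cumulative distribution function under Gray order. Then (a) $\phi_{\mathrm{SFEG}}$ is uniquely decodable, i.e. the map $(x^n_{(1)},\dots,x^n_{(k)})\mapsto\phi_{\mathrm{SFEG}}(x^n_{(1)})\cdots\phi_{\mathrm{SFEG}}(x^n_{(k)})$ (concatenation), taken over all $k\ge 1$ and all $k$-tuples of sequences in $\{0,1\}^n$, is injective; and (b) for $X^n$ i.i.d. with distribution $p$, $$\mathbb{E}\big[|\phi_{\mathrm{SFEG}}(X^n)|\big]<nH(X)+2-\log_2\frac{1+\rho}{\rho},$$ where $|u|$ is the length of a string $u$ and $H(X)=-p(0)\log_2p(0)-p(1)\log_2p(1)$.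
   Context: Let $p$ be a probability distribution on $\{0,1\}$ with $p(0),p(1)\in(0,1)$ and $p(0)\ne p(1)$, and set $\rho=\max\{p(0)/p(1),p(1)/p(0)\}\in(1,\infty)$. For $x^n=(x_1,\dots,x_n)\in\{0,1\}^n$, $p(x^n)=\prod_{i=1}^n p(x_i)$. Gray code is the bijection $g:\{0,1\}^n\to\{0,1\}^n$, $g(x^n)=x^n\oplus(0,x_1,\dots,x_{n-1})$ (bitwise XOR of $x^n$ with its one-bit right shift). Gray order $\preceq_G$ on $\{0,1\}^n$ is defined by $x^n\preceq_G y^n$ iff $g^{-1}(x^n)\preceq_L g^{-1}(y^n)$, where $\preceq_L$ is the lexicographic order. For $x^n$ not the largest element, $x^n+1$ denotes its immediate successor in Gray order; for $x^n$ not the smallest element, $x^n-1$ denotes its immediate predecessor. The cumulative distribution function is $F(x^n)=\sum_{a^n\preceq_G x^n}p(a^n)$, with the convention $F(x^n-1):=0$ when $x^n$ is the smallest element in Gray order. Logarithms are base 2. *)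

(* Defs.v *)
From Stdlib Require Import Reals Lra Lia ZArith List.
Import ListNotations.
Open Scope R_scope.

(* Binary strings are lists of booleans; bit 0 = false, bit 1 = true. *)

Definition log2 (x : R) : R := ln x / ln 2.

Definition floorR (r : R) : Z := (up r - 1)%Z.
Definition ceilR (r : R) : Z := (- floorR (- r))%Z.

Definition pseq (p : bool -> R) (x : list bool) : R :=
  fold_right (fun b r => p b * r) 1 x.

Fixpoint all_seqs (n : nat) : list (list bool) :=
  match n with
  | O => [ [] ]
  | S m => map (cons false) (all_seqs m) ++ map (cons true) (all_seqs m)
  end.

Definition sumR {A : Type} (f : A -> R) (l : list A) : R :=
  fold_right (fun a s => f a + s) 0 l.

(* Gray code g(x) = x XOR (0, x_1, ..., x_{n-1}) *)
Fixpoint gray_aux (prev : bool) (x : list bool) : list bool :=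
  match x with
  | [] => []
  | a :: t => xorb a prev :: gray_aux a t
  end.
Definition gray (x : list bool) : list bool := gray_aux false x.

(* its inverse: x_i = y_1 xor ... xor y_i *)
Fixpoint gray_inv_aux (acc : bool) (y : list bool) : list bool :=
  match y with
  | [] => []
  | b :: t => xorb acc b :: gray_inv_aux (xorb acc b) t
  end.
Definition gray_inv (y : list bool) : list bool := gray_inv_aux false y.

Fixpoint lex_le (x y : list bool) : bool :=
  match x, y with
  | [], _ => true
  | _ :: _, [] => false
  | a :: x', b :: y' =>
      if Bool.eqb a b then lex_le x' y' else andb (negb a) b
  end.
Definition lex_lt (x y : list bool) : bool :=
  andb (lex_le x y) (negb (lex_le y x)).

Definition gray_le (x y : list bool) : bool := lex_le (gray_inv x) (gray_inv y).
Definition gray_lt (x y : list bool) : bool := lex_lt (gray_inv x) (gray_inv y).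

Definition Fgray (p : bool -> R) (n : nat) (x : list bool) : R :=
  sumR (fun a => if gray_le a x then pseq p a else 0) (all_seqs n).

(* F(x^n - 1): sum of p(a) over a strictly below x in Gray order
   (equals F of the Gray predecessor, and 0 for the smallest element) *)
Definition Fgray_prev (p : bool -> R) (n : nat) (x : list bool) : R :=
  sumR (fun a => if gray_lt a x then pseq p a else 0) (all_seqs n).

(* i-th bit (i >= 1) of the binary expansion of t in [0,1) *)
Definition bin_digit (t : R) (i : nat) : bool := Z.odd (floorR (t * 2 ^ i)).

Definition rho (p : bool -> R) : R := Rmax (p false / p true) (p true / p false).

Definition alpha_s (p : bool -> R) : R := (1 + rho p) / rho p.

Definition ell_s (p : bool -> R) (x : list bool) : Z :=
  (ceilR (- log2 (alpha_s p * pseq p x)) + 1)%Z.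

Definition sfeg (p : bool -> R) (n : nat) (x : list bool) : list bool :=
  map (fun i => bin_digit (Fgray_prev p n x + pseq p x / 2) (S i))
      (seq 0 (Z.to_nat (ell_s p x))).

Definition entropy (p : bool -> R) : R :=
  - (p false * log2 (p false)) - p true * log2 (p true).

(* Main.v *)
Require Import Defs.
From Stdlib Require Import Reals Lra Lia ZArith List Bool.
Import ListNotations.
Open Scope R_scope.

Lemma lex_le_refl x : lex_le x x = true.
Proof. induction x as [|a x IH]; simpl; auto. rewrite eqb_reflx. exact IH. Qed.

Lemma lex_le_total x y : lex_le x y = false -> lex_le y x = true.
Proof.
  revert y; induction x as [|a x IH]; intros [|b y]; simpl; auto; try discriminate.
  destruct a, b; simpl; intros; auto; discriminate.
Qed.

Lemma lex_le_antisym x y : lex_le x y = true -> lex_le y x = true -> x = y.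
Proof.
  revert y; induction x as [|a x IH]; intros [|b y]; simpl; intros H1 H2; auto; try discriminate.
  destruct a, b; simpl in *; try discriminate; f_equal; auto.
Qed.

Lemma lex_le_trans x y z : lex_le x y = true -> lex_le y z = true -> lex_le x z = true.
Proof.
  revert y z; induction x as [|a x IH]; intros [|b y] [|c z]; simpl; intros H1 H2; auto; try discriminate.
  destruct a, b, c; simpl in *; try discriminate; eauto.
Qed.

Lemma lex_lt_neg x y : lex_lt x y = negb (lex_le y x).
Proof. unfold lex_lt. destruct (lex_le y x) eqn:E; simpl.
 - apply andb_false_r.
 - rewrite (lex_le_total _ _ E). reflexivity. Qed.

Lemma lex_le_app d a b : lex_le (d ++ a) (d ++ b) = lex_le a b.
Proof. induction d as [|c d IH]; simpl; auto. rewrite eqb_reflx. exact IH. Qed.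

Lemma gray_inv_gray_aux x pr : gray_inv_aux pr (gray_aux pr x) = x.
Proof. revert pr; induction x as [|a x IH]; intros pr; simpl; auto.
  replace (xorb pr (xorb a pr)) with a by (destruct a, pr; reflexivity). rewrite IH; auto. Qed.
Lemma gray_gray_inv_aux y acc : gray_aux acc (gray_inv_aux acc y) = y.
Proof. revert acc; induction y as [|b y IH]; intros acc; simpl; auto.
  rewrite IH. f_equal. destruct b, acc; reflexivity. Qed.
Lemma gray_inv_gray x : gray_inv (gray x) = x.
Proof. apply gray_inv_gray_aux. Qed.
Lemma gray_gray_inv x : gray (gray_inv x) = x.
Proof. apply gray_gray_inv_aux. Qed.
Lemma gray_aux_length x pr : length (gray_aux pr x) = length x.
Proof. revert pr; induction x; intros; simpl; auto. Qed.
Lemma gray_inv_aux_length x pr : length (gray_inv_aux pr x) = length x.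
Proof. revert pr; induction x; intros; simpl; auto. Qed.
Lemma gray_inv_inj x y : gray_inv x = gray_inv y -> x = y.
Proof. intros H. rewrite <- (gray_gray_inv x), <- (gray_gray_inv y), H. auto. Qed.

Fixpoint lastb (pr : bool) (l : list bool) : bool :=
  match l with [] => pr | a :: t => lastb a t end.
Lemma gray_aux_app d r pr : gray_aux pr (d ++ r) = gray_aux pr d ++ gray_aux (lastb pr d) r.
Proof. revert pr; induction d as [|a d IH]; intros pr; simpl; auto. rewrite IH. auto. Qed.
Lemma gray_zeros k : gray_aux false (repeat false k) = repeat false k.
Proof. induction k; simpl; auto. rewrite IHk; auto. Qed.
Lemma gray_ones k : gray_aux true (repeat true k) = repeat false k.
Proof. induction k; simpl; auto. rewrite IHk; auto. Qed.
Lemma gray_tail k : gray_aux true (repeat false k) = gray_aux false (repeat true k).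
Proof. destruct k; simpl; auto. rewrite gray_zeros, gray_ones; auto. Qed.

Definition flip (x z : list bool) := exists c b t, x = c ++ b :: t /\ z = c ++ negb b :: t.

Lemma flip_sym x z : flip x z -> flip z x.
Proof. intros (c & b & t & H1 & H2). exists c, (negb b), t. rewrite negb_involutive. auto. Qed.

Lemma gray_flip d k : flip (gray (d ++ false :: repeat true k)) (gray (d ++ true :: repeat false k)).
Proof. unfold gray; rewrite !gray_aux_app. simpl.
  exists (gray_aux false d), (lastb false d), (gray_aux false (repeat true k)).
  split; [reflexivity|]. rewrite gray_tail. reflexivity. Qed.

Lemma all_ones_or l : l = repeat true (length l) \/ exists d k, l = d ++ false :: repeat true k.
Proof. induction l as [|a l IH]; simpl; auto.
  destruct IH as [H|(d&k&H)].
  - destruct a. left. rewrite H at 1. rewrite ?repeat_length. auto.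
    right. exists [], (length l). simpl. rewrite H at 1. rewrite ?repeat_length. auto.
  - right. exists (a :: d), k. rewrite H. auto. Qed.
Lemma all_zeros_or l : l = repeat false (length l) \/ exists d k, l = d ++ true :: repeat false k.
Proof. induction l as [|a l IH]; simpl; auto.
  destruct IH as [H|(d&k&H)].
  - destruct a. right. exists [], (length l). simpl. rewrite H at 1. rewrite ?repeat_length. auto.
    left. rewrite H at 1. rewrite ?repeat_length. auto.
  - right. exists (a :: d), k. rewrite H. auto. Qed.
Lemma zeros_le v : lex_le (repeat false (length v)) v = true.
Proof. induction v as [|a v IH]; simpl; auto. destruct a; simpl; auto. Qed.
Lemma ones_ge u : lex_le u (repeat true (length u)) = true.
Proof. induction u as [|a u IH]; simpl; auto. destruct a; simpl; auto. Qed.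

Lemma succ_ex u : forall v, length u = length v -> lex_le v u = false ->
  exists d k, u = d ++ false :: repeat true k /\ lex_le (d ++ true :: repeat false k) v = true.
Proof.
  induction u as [|a u IH]; intros [|b v] Hl H; simpl in *; try discriminate.
  destruct a, b; simpl in *; try discriminate.
  - destruct (IH v ltac:(lia) H) as (d&k&H1&H2). exists (true :: d), k. rewrite H1. simpl. auto.
  - destruct (all_ones_or u) as [E|(d&k&E)].
    + exists [], (length u). simpl. split. rewrite E at 1. rewrite ?repeat_length. auto.
      replace (length u) with (length v) by lia. apply zeros_le.
    + exists (false :: d), k. rewrite E. simpl. auto.
  - destruct (IH v ltac:(lia) H) as (d&k&H1&H2). exists (false :: d), k. rewrite H1. simpl. auto.
Qed.

Lemma pred_ex u : forall v, length u = length v -> lex_le v u = false ->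
  exists e k, v = e ++ true :: repeat false k /\ lex_le u (e ++ false :: repeat true k) = true.
Proof.
  induction u as [|a u IH]; intros [|b v] Hl H; simpl in *; try discriminate.
  destruct a, b; simpl in *; try discriminate.
  - destruct (IH v ltac:(lia) H) as (d&k&H1&H2). exists (true :: d), k. rewrite H1. simpl. auto.
  - destruct (all_zeros_or v) as [E|(d&k&E)].
    + exists [], (length v). simpl. split. rewrite E at 1. rewrite ?repeat_length. auto.
      replace (length v) with (length u) by lia. apply ones_ge.
    + exists (true :: d), k. rewrite E. simpl. auto.
  - destruct (IH v ltac:(lia) H) as (d&k&H1&H2). exists (false :: d), k. rewrite H1. simpl. auto.
Qed.

Lemma glt_neg x y : gray_lt x y = negb (gray_le y x).
Proof. apply lex_lt_neg. Qed.
Lemma glt_irrefl x : gray_lt x x = false.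
Proof. rewrite glt_neg. unfold gray_le. rewrite lex_le_refl. auto. Qed.
Lemma glt_asym x y : gray_lt x y = true -> gray_lt y x = false.
Proof. rewrite !glt_neg. unfold gray_le. intros H. apply negb_true_iff in H.
  rewrite (lex_le_total _ _ H). auto. Qed.
Lemma glt_trans a x y : gray_lt a x = true -> gray_lt x y = true -> gray_lt a y = true.
Proof. rewrite !glt_neg. unfold gray_le. intros H1 H2. apply negb_true_iff in H1, H2.
  apply negb_true_iff. destruct (lex_le (gray_inv y) (gray_inv a)) eqn:E; auto.
  pose proof (lex_le_total _ _ H1). rewrite (lex_le_trans _ _ _ E H) in H2. discriminate. Qed.
Lemma gle_lt z y : gray_le z y = true -> z <> y -> gray_lt z y = true.
Proof. rewrite glt_neg. unfold gray_le. intros H Hne. apply negb_true_iff.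
  destruct (lex_le (gray_inv y) (gray_inv z)) eqn:E; auto.
  exfalso. apply Hne. apply gray_inv_inj. apply lex_le_antisym; auto. Qed.
Lemma gle_nlt x z : gray_le x z = true -> gray_lt z x = false.
Proof. rewrite glt_neg. intros ->. auto. Qed.
Lemma glt_total x y : x <> y -> gray_lt x y = true \/ gray_lt y x = true.
Proof. intros Hne. rewrite !glt_neg. unfold gray_le.
  destruct (lex_le (gray_inv y) (gray_inv x)) eqn:E; auto.
  destruct (lex_le (gray_inv x) (gray_inv y)) eqn:E2; auto.
  exfalso. apply Hne. apply gray_inv_inj. apply lex_le_antisym; auto. Qed.

Lemma succ_gray x y : length x = length y -> gray_lt x y = true ->
  exists z, length z = length x /\ gray_lt x z = true /\ gray_le z y = true /\ flip x z.
Proof.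
  intros Hl H. rewrite glt_neg in H. unfold gray_le in H. apply negb_true_iff in H.
  assert (Hl' : length (gray_inv x) = length (gray_inv y)) by
    (unfold gray_inv; rewrite !gray_inv_aux_length; auto).
  destruct (succ_ex _ _ Hl' H) as (d&k&Hu&Hw).
  exists (gray (d ++ true :: repeat false k)).
  assert (Hg : gray_inv (gray (d ++ true :: repeat false k)) = d ++ true :: repeat false k)
    by apply gray_inv_gray.
  split; [|split; [|split]].
  - unfold gray. rewrite gray_aux_length.
    rewrite <- (gray_inv_aux_length x false). fold (gray_inv x). rewrite Hu.
    rewrite !length_app. simpl. rewrite !repeat_length. auto.
  - rewrite glt_neg. unfold gray_le. rewrite Hg, Hu, lex_le_app. auto.
  - unfold gray_le. rewrite Hg. auto.
  - rewrite <- (gray_gray_inv x), Hu. apply gray_flip.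
Qed.

Lemma pred_gray x y : length x = length y -> gray_lt x y = true ->
  exists z, length z = length y /\ gray_le x z = true /\ gray_lt z y = true /\ flip y z.
Proof.
  intros Hl H. rewrite glt_neg in H. unfold gray_le in H. apply negb_true_iff in H.
  assert (Hl' : length (gray_inv x) = length (gray_inv y)) by
    (unfold gray_inv; rewrite !gray_inv_aux_length; auto).
  destruct (pred_ex _ _ Hl' H) as (d&k&Hu&Hw).
  exists (gray (d ++ false :: repeat true k)).
  assert (Hg : gray_inv (gray (d ++ false :: repeat true k)) = d ++ false :: repeat true k)
    by apply gray_inv_gray.
  split; [|split; [|split]].
  - unfold gray. rewrite gray_aux_length.
    rewrite <- (gray_inv_aux_length y false). fold (gray_inv y). rewrite Hu.
    rewrite !length_app. simpl. rewrite !repeat_length. auto.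
  - unfold gray_le. rewrite Hg. auto.
  - rewrite glt_neg. unfold gray_le. rewrite Hg, Hu, lex_le_app. auto.
  - rewrite <- (gray_gray_inv y), Hu. apply flip_sym, gray_flip.
Qed.

Lemma sumR_cons {A} (f : A -> R) a l : sumR f (a :: l) = f a + sumR f l.
Proof. reflexivity. Qed.
Lemma sumR_nil {A} (f : A -> R) : sumR f [] = 0.
Proof. reflexivity. Qed.
Lemma sumR_le {A} (f g : A -> R) l : (forall a, g a <= f a) -> sumR g l <= sumR f l.
Proof. intros H; induction l; rewrite ?sumR_cons, ?sumR_nil; [lra|]. specialize (H a); lra. Qed.
Lemma sumR_lt {A} (f g : A -> R) l : l <> [] -> (forall a, f a < g a) -> sumR f l < sumR g l.
Proof. intros Hl H; destruct l as [|a l]; [congruence|]. rewrite !sumR_cons.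
  pose proof (sumR_le g f l (fun a => Rlt_le _ _ (H a))). specialize (H a). lra. Qed.
Lemma sumR_ge1 {A} (f g : A -> R) l x : (forall a, g a <= f a) -> In x l -> sumR g l + (f x - g x) <= sumR f l.
Proof. intros H; induction l as [|a l IH]; intros Hin; [contradiction|]. rewrite !sumR_cons.
  destruct Hin as [->|Hin].
  - pose proof (sumR_le f g l H). lra.
  - specialize (IH Hin). specialize (H a). lra. Qed.
Lemma sumR_ge2 {A} (f g : A -> R) l x z : (forall a, g a <= f a) -> In x l -> In z l -> x <> z ->
  sumR g l + (f x - g x) + (f z - g z) <= sumR f l.
Proof. intros H; induction l as [|a l IH]; intros Hx Hz Hne; [contradiction|]. rewrite !sumR_cons.
  destruct Hx as [->|Hx]; destruct Hz as [->|Hz].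
  - contradiction.
  - pose proof (sumR_ge1 f g l z H Hz). lra.
  - pose proof (sumR_ge1 f g l x H Hx). lra.
  - specialize (IH Hx Hz Hne). specialize (H a). lra. Qed.
Lemma sumR_app {A} (f : A -> R) l1 l2 : sumR f (l1 ++ l2) = sumR f l1 + sumR f l2.
Proof. induction l1; simpl app; rewrite ?sumR_cons, ?sumR_nil; try rewrite IHl1; lra. Qed.
Lemma sumR_map {A B} (f : B -> R) (g : A -> B) l : sumR f (map g l) = sumR (fun a => f (g a)) l.
Proof. induction l; simpl map; rewrite ?sumR_cons, ?sumR_nil; try rewrite IHl; auto. Qed.
Lemma sumR_ext {A} (f g : A -> R) l : (forall a, f a = g a) -> sumR f l = sumR g l.
Proof. intros H; induction l; rewrite ?sumR_cons, ?sumR_nil; try rewrite IHl, H; auto. Qed.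
Lemma sumR_plus {A} (f g : A -> R) l : sumR (fun a => f a + g a) l = sumR f l + sumR g l.
Proof. induction l; rewrite ?sumR_cons, ?sumR_nil; try rewrite IHl; lra. Qed.
Lemma sumR_minus {A} (f g : A -> R) l : sumR (fun a => f a - g a) l = sumR f l - sumR g l.
Proof. induction l; rewrite ?sumR_cons, ?sumR_nil; try rewrite IHl; lra. Qed.
Lemma sumR_scal {A} (f : A -> R) c l : sumR (fun a => c * f a) l = c * sumR f l.
Proof. induction l; rewrite ?sumR_cons, ?sumR_nil; try rewrite IHl; lra. Qed.

Lemma all_seqs_S m : all_seqs (S m) = map (cons false) (all_seqs m) ++ map (cons true) (all_seqs m).
Proof. reflexivity. Qed.
Lemma sumR_all_S (f : list bool -> R) m : sumR f (all_seqs (S m)) =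
  sumR (fun a => f (false :: a)) (all_seqs m) + sumR (fun a => f (true :: a)) (all_seqs m).
Proof. rewrite all_seqs_S, sumR_app, !sumR_map. reflexivity. Qed.
Lemma in_all_seqs x : In x (all_seqs (length x)).
Proof. induction x as [|a x IH]; simpl length; [simpl; auto|].
  rewrite all_seqs_S, in_app_iff. destruct a; [right|left]; apply in_map; auto. Qed.

Section P.
Variable p : bool -> R.
Hypothesis hpos : forall b, 0 < p b.
Hypothesis hle1 : forall b, p b <= 1.

Lemma pseq_cons b a : pseq p (b :: a) = p b * pseq p a.
Proof. reflexivity. Qed.
Lemma pseq_pos x : 0 < pseq p x.
Proof. induction x; rewrite ?pseq_cons; simpl; [lra|]. apply Rmult_lt_0_compat; auto. Qed.
Lemma pseq_le1 x : pseq p x <= 1.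
Proof. induction x; rewrite ?pseq_cons; simpl; [lra|].
  pose proof (pseq_pos x). pose proof (hpos a). pose proof (hle1 a). nra. Qed.
Lemma pseq_app c l : pseq p (c ++ l) = pseq p c * pseq p l.
Proof. induction c; simpl app; rewrite ?pseq_cons; [simpl; ring|]. rewrite IHc. ring. Qed.

Lemma flip_ratio (hrat : forall b, p b <= rho p * p (negb b)) x z :
  flip x z -> pseq p x <= rho p * pseq p z.
Proof. intros (c&b&t&->&->). rewrite !pseq_app, !pseq_cons.
  pose proof (pseq_pos c). pose proof (pseq_pos t). specialize (hrat b).
  replace (rho p * (pseq p c * (p (negb b) * pseq p t))) with
     (pseq p c * ((rho p * p (negb b)) * pseq p t)) by ring.
  apply Rmult_le_compat_l; [lra|]. apply Rmult_le_compat_r; lra. Qed.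

Definition mid n x := Fgray_prev p n x + pseq p x / 2.

Lemma Fprev_nonneg n x : 0 <= Fgray_prev p n x.
Proof. unfold Fgray_prev. apply Rle_trans with (sumR (fun _ : list bool => 0) (all_seqs n)).
  - induction (all_seqs n); rewrite ?sumR_cons, ?sumR_nil; lra.
  - apply sumR_le. intros a. destruct (gray_lt a x); [pose proof (pseq_pos a)|]; lra. Qed.

Hypothesis hsum : p false + p true = 1.

Lemma pseq_sum m : sumR (fun a => pseq p a) (all_seqs m) = 1.
Proof. induction m; [simpl; lra|]. rewrite sumR_all_S.
  rewrite (sumR_ext (fun a => pseq p (false :: a)) (fun a => p false * pseq p a)) by reflexivity.
  rewrite (sumR_ext (fun a => pseq p (true :: a)) (fun a => p true * pseq p a)) by reflexivity.
  assert (E: sumR (pseq p) (all_seqs m) = 1) by exact IHm.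
  rewrite !sumR_scal; rewrite ?E, ?IHm; lra. Qed.

Lemma mid_range n x : length x = n -> 0 < mid n x < 1.
Proof. intros Hx. unfold mid. pose proof (Fprev_nonneg n x). pose proof (pseq_pos x).
  assert (Fgray_prev p n x + pseq p x <= 1).
  { rewrite <- (pseq_sum n). unfold Fgray_prev.
    pose proof (sumR_ge1 (fun a => pseq p a) (fun a => if gray_lt a x then pseq p a else 0)
      (all_seqs n) x) as HH. simpl in HH. rewrite glt_irrefl in HH.
    assert (Hin : In x (all_seqs n)) by (subst; apply in_all_seqs).
    assert (Hle : forall a, (if gray_lt a x then pseq p a else 0) <= pseq p a)
      by (intros a; destruct (gray_lt a x); [lra|pose proof (pseq_pos a); lra]).
    specialize (HH Hle Hin). lra. }
  lra. Qed.

Hypothesis hrat : forall b, p b <= rho p * p (negb b).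
Hypothesis hrho : 1 < rho p.

Lemma dist_lt n x y : length x = n -> length y = n -> gray_lt x y = true ->
  (rho p + 1) * pseq p x <= 2 * rho p * (mid n y - mid n x) /\
  (rho p + 1) * pseq p y <= 2 * rho p * (mid n y - mid n x).
Proof.
  intros Hx Hy Hxy.
  pose (f := fun a => if gray_lt a y then pseq p a else 0).
  pose (g := fun a => if gray_lt a x then pseq p a else 0).
  assert (Hgf : forall a, g a <= f a).
  { intros a. unfold f, g. destruct (gray_lt a x) eqn:E1.
    - rewrite (glt_trans _ _ _ E1 Hxy). lra.
    - destruct (gray_lt a y); [pose proof (pseq_pos a)|]; lra. }
  assert (ED : mid n y - mid n x = sumR f (all_seqs n) - sumR g (all_seqs n) + (pseq p y - pseq p x) / 2)
    by (unfold mid, Fgray_prev; fold f g; lra).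
  assert (Hinx : In x (all_seqs n)) by (subst; apply in_all_seqs).
  assert (fx : f x = pseq p x) by (unfold f; rewrite Hxy; auto).
  assert (gx : g x = 0) by (unfold g; rewrite glt_irrefl; auto).
  pose proof (sumR_ge1 f g _ x Hgf Hinx) as H1.
  pose proof (pseq_pos x) as Px. pose proof (pseq_pos y) as Py.
  rewrite ED. split.
  - destruct (succ_gray x y ltac:(congruence) Hxy) as (z & Hz & Hxz & Hzy & Hfl).
    pose proof (flip_ratio hrat _ _ Hfl) as Hr. pose proof (pseq_pos z) as Pz.
    destruct (list_eq_dec bool_dec z y) as [->|Hne].
    + nra.
    + assert (Hzy' := gle_lt _ _ Hzy Hne).
      assert (Hinz : In z (all_seqs n)) by (replace n with (length z) by congruence; apply in_all_seqs).
      assert (Hxz' : x <> z) by (intros ->; rewrite glt_irrefl in Hxz; discriminate).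
      pose proof (sumR_ge2 f g _ x z Hgf Hinx Hinz Hxz') as H2.
      assert (fz : f z = pseq p z) by (unfold f; rewrite Hzy'; auto).
      assert (gz : g z = 0) by (unfold g; rewrite (glt_asym _ _ Hxz); auto).
      nra.
  - destruct (pred_gray x y ltac:(congruence) Hxy) as (z & Hz & Hxz & Hzy & Hfl).
    pose proof (flip_ratio hrat _ _ Hfl) as Hr. pose proof (pseq_pos z) as Pz.
    destruct (list_eq_dec bool_dec z x) as [->|Hne].
    + nra.
    + assert (Hinz : In z (all_seqs n)) by (replace n with (length z) by congruence; apply in_all_seqs).
      assert (Hxz' : x <> z) by auto.
      pose proof (sumR_ge2 f g _ x z Hgf Hinx Hinz Hxz') as H2.
      assert (fz : f z = pseq p z) by (unfold f; rewrite Hzy; auto).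
      assert (gz : g z = 0) by (unfold g; rewrite (gle_nlt _ _ Hxz); auto).
      nra.
Qed.

End P.

Lemma floor_spec r : IZR (floorR r) <= r < IZR (floorR r) + 1.
Proof. unfold floorR. destruct (archimed r) as [H1 H2]. rewrite minus_IZR. lra. Qed.
Lemma floor_unique k r : IZR k <= r < IZR k + 1 -> floorR r = k.
Proof. intros [H1 H2]. unfold floorR. assert (up r = k + 1)%Z.
  { symmetry. apply tech_up; rewrite plus_IZR; lra. } lia. Qed.
Lemma ceil_spec r : r <= IZR (ceilR r) < r + 1.
Proof. unfold ceilR. destruct (floor_spec (- r)). rewrite opp_IZR. lra. Qed.
Lemma floor_double t : floorR (2*t) = (2 * floorR t)%Z \/ floorR (2*t) = (2 * floorR t + 1)%Z.
Proof. destruct (floor_spec t) as [H1 H2]. set (F := floorR t) in *.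
  destruct (Rlt_le_dec t (IZR F + /2)).
  - left. apply floor_unique. rewrite mult_IZR. lra.
  - right. apply floor_unique. rewrite plus_IZR, mult_IZR. lra. Qed.

Lemma bits_floor L m m' : 0 <= m < 1 -> 0 <= m' < 1 ->
  (forall i, (i < L)%nat -> bin_digit m (S i) = bin_digit m' (S i)) ->
  floorR (m * 2 ^ L) = floorR (m' * 2 ^ L).
Proof.
  intros Hm Hm'. induction L as [|L IH]; intros Hb.
  - simpl. rewrite !Rmult_1_r. rewrite (floor_unique 0 m), (floor_unique 0 m'); auto; lra.
  - assert (E: floorR (m * 2^L) = floorR (m' * 2^L)) by (apply IH; intros; apply Hb; lia).
    assert (Hd := Hb L (Nat.lt_succ_diag_r L)). unfold bin_digit in Hd.
    replace (m * 2 ^ S L) with (2 * (m * 2^L)) in * by (simpl; ring).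
    replace (m' * 2 ^ S L) with (2 * (m' * 2^L)) in * by (simpl; ring).
    destruct (floor_double (m * 2^L)) as [A|A]; destruct (floor_double (m' * 2^L)) as [B|B];
      rewrite A, B in *; rewrite E in *; auto;
      rewrite ?Z.odd_add, ?Z.odd_mul in Hd; simpl in Hd; discriminate.
Qed.

Lemma floor_close a b : floorR a = floorR b -> Rabs (a - b) < 1.
Proof. intros E. destruct (floor_spec a), (floor_spec b). rewrite E in *.
  unfold Rabs; destruct Rcase_abs; lra. Qed.

Lemma nth_map_seq (f : nat -> bool) L i : (i < L)%nat -> nth i (map f (seq 0 L)) false = f i.
Proof. intros H. rewrite nth_indep with (d' := f 0%nat) by (rewrite length_map, length_seq; auto).
  rewrite map_nth, seq_nth; auto. Qed.

Lemma sfeg_length p n x : length (sfeg p n x) = Z.to_nat (ell_s p x).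
Proof. unfold sfeg. rewrite length_map, length_seq. auto. Qed.

Lemma ln2_pos : 0 < ln 2.
Proof. rewrite <- ln_1. apply ln_increasing; lra. Qed.

Lemma len_bound p x : 1 < rho p -> 0 < pseq p x <= 1 ->
  (1 <= ell_s p x)%Z /\ 2 * rho p <= 2 ^ (Z.to_nat (ell_s p x)) * ((rho p + 1) * pseq p x)
  /\ IZR (ell_s p x) < - log2 (alpha_s p * pseq p x) + 2.
Proof.
  intros Hr [Hq0 Hq1].
  set (a := alpha_s p * pseq p x).
  assert (Ha0 : 0 < a). { unfold a, alpha_s. apply Rmult_lt_0_compat; auto. apply Rdiv_lt_0_compat; lra. }
  assert (Ha2 : a < 2).
  { unfold a, alpha_s. assert ((1 + rho p) / rho p < 2).
    { replace ((1 + rho p) / rho p) with (1 + / rho p) by (field; lra).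
      assert (/ rho p < 1) by (rewrite <- Rinv_1; apply Rinv_lt_contravar; lra). lra. }
    assert (0 < (1 + rho p) / rho p) by (apply Rdiv_lt_0_compat; lra). nra. }
  pose proof ln2_pos as L2.
  set (r := - log2 a).
  assert (Hr1 : -1 < r).
  { unfold r, log2. assert (ln a < ln 2) by (apply ln_increasing; lra).
    assert (ln a / ln 2 < 1).
    { unfold Rdiv. apply Rmult_lt_reg_r with (ln 2); auto.
      rewrite Rmult_assoc, Rinv_l, Rmult_1_r; lra. } lra. }
  destruct (ceil_spec r) as [C1 C2].
  assert (Hc : (0 <= ceilR r)%Z). { assert (-1 < ceilR r)%Z by (apply lt_IZR; lra). lia. }
  assert (He : ell_s p x = (ceilR r + 1)%Z) by reflexivity.
  assert (HI : IZR (ell_s p x) = IZR (ceilR r) + 1) by (rewrite He, plus_IZR; auto).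
  split; [lia|]. split.
  - set (L := Z.to_nat (ell_s p x)).
    assert (HL : INR L = IZR (ell_s p x)) by (unfold L; rewrite INR_IZR_INZ, Z2Nat.id; auto; lia).
    rewrite <- Rpower_pow by lra. unfold Rpower. rewrite HL.
    assert (Hexp : 2 / a <= exp (IZR (ell_s p x) * ln 2)).
    { replace (2 / a) with (exp (r * ln 2 + ln 2)).
      - destruct (Rle_lt_or_eq_dec (r * ln 2 + ln 2) (IZR (ell_s p x) * ln 2)).
        + nra.
        + apply Rlt_le, exp_increasing; auto.
        + rewrite e; lra.
      - rewrite exp_plus, exp_ln by lra. unfold r, log2.
        replace (- (ln a / ln 2) * ln 2) with (- ln a) by (field; lra).
        rewrite exp_Ropp, exp_ln by auto. field; lra. }
    assert (E2 : 2 <= exp (IZR (ell_s p x) * ln 2) * a).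
    { apply Rmult_le_reg_r with (/ a). apply Rinv_0_lt_compat; auto.
      rewrite Rmult_assoc, Rinv_r, Rmult_1_r by lra. exact Hexp. }
    unfold a, alpha_s in E2.
    replace ((rho p + 1) * pseq p x) with (rho p * ((1 + rho p) / rho p * pseq p x)) by (field; lra).
    nra.
  - fold a. fold r. lra.
Qed.

Section M.
Variable p : bool -> R.
Hypothesis hpos : forall b, 0 < p b.
Hypothesis hle1 : forall b, p b <= 1.
Hypothesis hsum : p false + p true = 1.
Hypothesis hrat : forall b, p b <= rho p * p (negb b).
Hypothesis hrho : 1 < rho p.
Variable n : nat.

Lemma prefix_free x y r : length x = n -> length y = n -> sfeg p n x ++ r = sfeg p n y -> x = y.
Proof.
  intros Hx Hy E.
  destruct (list_eq_dec bool_dec x y) as [|Hne]; auto. exfalso.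
  set (L := Z.to_nat (ell_s p x)).
  assert (Hbits : forall i, (i < L)%nat -> bin_digit (mid p n x) (S i) = bin_digit (mid p n y) (S i)).
  { intros i Hi.
    assert (Ly : (i < Z.to_nat (ell_s p y))%nat).
    { rewrite <- (sfeg_length p n y), <- E, length_app, sfeg_length. fold L. lia. }
    pose proof (f_equal (fun l => nth i l false) E) as Ei. simpl in Ei.
    rewrite app_nth1 in Ei by (rewrite sfeg_length; auto).
    unfold sfeg in Ei. rewrite !nth_map_seq in Ei by auto. exact Ei. }
  pose proof (mid_range p hpos hsum n x Hx) as Mx.
  pose proof (mid_range p hpos hsum n y Hy) as My.
  pose proof (bits_floor L (mid p n x) (mid p n y) ltac:(lra) ltac:(lra) Hbits) as Fl.
  apply floor_close in Fl.
  destruct (len_bound p x hrho (conj (pseq_pos p hpos x) (pseq_le1 p hpos hle1 x))) as (_ & B & _).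
  fold L in B.
  assert (D : (rho p + 1) * pseq p x <= 2 * rho p * Rabs (mid p n y - mid p n x)).
  { destruct (glt_total x y Hne) as [H|H].
    - destruct (dist_lt p hpos hrat hrho n x y Hx Hy H) as [D _].
      rewrite Rabs_right; auto. pose proof (pseq_pos p hpos x). nra.
    - destruct (dist_lt p hpos hrat hrho n y x Hy Hx H) as [_ D].
      rewrite Rabs_left1. lra. pose proof (pseq_pos p hpos x). nra. }
  replace (mid p n x * 2 ^ L - mid p n y * 2 ^ L) with (- ((mid p n y - mid p n x) * 2 ^ L)) in Fl by ring.
  rewrite Rabs_Ropp, Rabs_mult, (Rabs_right (2 ^ L)) in Fl by (apply Rle_ge, pow_le; lra).
  assert (P : 0 < 2 ^ L) by (apply pow_lt; lra).
  pose proof (Rabs_pos (mid p n y - mid p n x)).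
  nra.
Qed.

Lemma sfeg_nonempty x : sfeg p n x <> [].
Proof. intros E. apply (f_equal (@length bool)) in E. rewrite sfeg_length in E. simpl in E.
  destruct (len_bound p x hrho (conj (pseq_pos p hpos x) (pseq_le1 p hpos hle1 x))) as (H & _). lia. Qed.

Lemma ud xs : forall ys, Forall (fun x => length x = n) xs -> Forall (fun y => length y = n) ys ->
  concat (map (sfeg p n) xs) = concat (map (sfeg p n) ys) -> xs = ys.
Proof.
  induction xs as [|x xs IH]; intros [|y ys] Hx Hy E; simpl in E; auto.
  - exfalso. symmetry in E. apply app_eq_nil in E. destruct E. apply (sfeg_nonempty y); auto.
  - exfalso. apply app_eq_nil in E. destruct E. apply (sfeg_nonempty x); auto.
  - apply Forall_cons_iff in Hx as [Hx1 Hx2]. apply Forall_cons_iff in Hy as [Hy1 Hy2].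
    destruct (app_eq_app _ _ _ _ E) as (l & [[E1 E2]|[E1 E2]]).
    + symmetry in E1. pose proof (prefix_free y x l ltac:(auto) ltac:(auto) E1). subst.
      rewrite app_inv_head_iff in E. f_equal. apply IH; auto.
    + symmetry in E1. pose proof (prefix_free x y l ltac:(auto) ltac:(auto) E1). subst.
      rewrite app_inv_head_iff in E. f_equal. apply IH; auto.
Qed.

Lemma log2_mult a b : 0 < a -> 0 < b -> log2 (a * b) = log2 a + log2 b.
Proof. intros. unfold log2. rewrite ln_mult by auto. pose proof ln2_pos. field; lra. Qed.

Lemma entropy_sum m : sumR (fun a => pseq p a * log2 (pseq p a)) (all_seqs m) = - INR m * entropy p.
Proof.
  induction m.
  - simpl. unfold log2. rewrite ln_1. field. pose proof ln2_pos; lra.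
  - rewrite sumR_all_S.
    rewrite (sumR_ext _ (fun a => (p false * log2 (p false)) * pseq p a + p false * (pseq p a * log2 (pseq p a)))).
    2:{ intros a. rewrite pseq_cons, log2_mult by (auto; apply pseq_pos; auto). ring. }
    rewrite (sumR_ext (fun a => pseq p (true :: a) * log2 (pseq p (true :: a))) (fun a => (p true * log2 (p true)) * pseq p a + p true * (pseq p a * log2 (pseq p a)))).
    2:{ intros a. rewrite pseq_cons, log2_mult by (auto; apply pseq_pos; auto). ring. }
    rewrite !sumR_plus, !sumR_scal, IHm.
    assert (E: sumR (pseq p) (all_seqs m) = 1) by exact (pseq_sum p hsum m).
    rewrite ?E, ?(pseq_sum p hsum m).
    rewrite S_INR. unfold entropy.
    set (A := p false * log2 (p false)). set (B := p true * log2 (p true)).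
    replace (p true) with (1 - p false) by lra. ring.
Qed.

End M.

Theorem theorem1 (p : bool -> R) (n : nat)
  (hp0 : 0 < p false < 1) (hp1 : 0 < p true < 1)
  (hsum : p false + p true = 1) (hneq : p false <> p true) :
  (forall xs ys : list (list bool),
      xs <> [] -> ys <> [] ->
      Forall (fun x => length x = n) xs ->
      Forall (fun y => length y = n) ys ->
      concat (map (sfeg p n) xs) = concat (map (sfeg p n) ys) ->
      xs = ys)
  /\
  sumR (fun x => pseq p x * INR (length (sfeg p n x))) (all_seqs n)
    < INR n * entropy p + 2 - log2 ((1 + rho p) / rho p).
Proof.
  assert (hpos : forall b, 0 < p b) by (intros []; lra).
  assert (hle1 : forall b, p b <= 1) by (intros []; lra).
  assert (h01 : p false <= rho p * p true).
  { unfold rho. pose proof (Rmax_l (p false / p true) (p true / p false)).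
    replace (p false) with (p false / p true * p true) at 1 by (field; lra). nra. }
  assert (h10 : p true <= rho p * p false).
  { unfold rho. pose proof (Rmax_r (p false / p true) (p true / p false)).
    replace (p true) with (p true / p false * p false) at 1 by (field; lra). nra. }
  assert (hrat : forall b, p b <= rho p * p (negb b)) by (intros []; simpl; auto).
  assert (hrho : 1 < rho p).
  { unfold rho. destruct (Rlt_or_le (p true) (p false)).
    - pose proof (Rmax_l (p false / p true) (p true / p false)).
      assert (1 < p false / p true).
      { replace (p false / p true) with (1 + (p false - p true) / p true) by (field; lra).
        assert (0 < (p false - p true) / p true) by (apply Rdiv_lt_0_compat; lra). lra. }
      lra.
    - pose proof (Rmax_r (p false / p true) (p true / p false)).
      assert (1 < p true / p false).
      { replace (p true / p false) with (1 + (p true - p false) / p false) by (field; lra).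
        assert (0 < (p true - p false) / p false) by (apply Rdiv_lt_0_compat; lra). lra. }
      lra. }
  split.
  - intros xs ys _ _. apply ud; auto.
  - set (c := log2 ((1 + rho p) / rho p)).
    assert (Hne : all_seqs n <> []).
    { intros E. pose proof (in_all_seqs (repeat false n)) as H. rewrite repeat_length, E in H. auto. }
    apply Rlt_le_trans with (sumR (fun x => (2 - c) * pseq p x - pseq p x * log2 (pseq p x)) (all_seqs n)).
    + apply sumR_lt; auto. intros x.
      destruct (len_bound p x hrho (conj (pseq_pos p hpos x) (pseq_le1 p hpos hle1 x))) as (H1 & _ & H3).
      rewrite sfeg_length, INR_IZR_INZ, Z2Nat.id by lia.
      rewrite log2_mult in H3 by (try apply pseq_pos; auto; unfold alpha_s; apply Rdiv_lt_0_compat; lra).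
      fold c in H3. unfold alpha_s in H3. fold c in H3.
      pose proof (pseq_pos p hpos x). nra.
    + rewrite sumR_minus, sumR_scal, entropy_sum by auto.
      assert (E: sumR (pseq p) (all_seqs n) = 1) by exact (pseq_sum p hsum n).
      rewrite ?E, ?(pseq_sum p hsum n). lra.
Qed.
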